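(* Let $\Gamma$ be a group, $\alpha\in\mathrm{Aut}(\Gamma)$ and $k\in\Gamma$, and put $\tilde\alpha=\mathrm{ad}(k)\circ\alpha$, where $\mathrm{ad}(k)(g)=kgk^{-1}$. Then $\bigoplus_{\mathbf{Q}_2}\Gamma\rtimes_\alpha V\cong\bigoplus_{\mathbf{Q}_2}\Gamma\rtimes_{\tilde\alpha}V$.
   Context: Cantor space $\mathfrak C=\{0,1\}^{\mathbf N}$; $C_m=\{m\cdot x\}$. Thompson's group $V$: homeomorphisms $v$ with $v(m_kx)=m'_kx$ for partitions $\mathfrak C=\bigsqcup C_{m_k}=\bigsqcup C_{m'_k}$; slope $v'(x)=2^{|m_k|-|m'_k|}$ on $C_{m_k}$. $\mathbf{Q}_2\subset\mathfrak C$: eventually-zero sequences. For a group $\Gamma$ and $\alpha\in\mathrm{Aut}(\Gamma)$, $\bigoplus_{\mathbf{Q}_2}\Gamma\rtimes_\alpha V$ is the semidirect product of finitely supported maps $\mathbf{Q}_2\to\Gamma$ by $V$ acting via $(v\cdot a)(x)=\alpha^{\log_2 v'(v^{-1}x)}(a(v^{-1}x))$ (the fraction group associated with $(\Gamma,\alpha)$). *)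

(* Defs.v *)
From Stdlib Require Import ZArith List ClassicalEpsilon.
Import ListNotations.

Record Group := {
  gcar :> Type;
  gmul : gcar -> gcar -> gcar;
  gone : gcar;
  ginv : gcar -> gcar;
  gmulA : forall x y z, gmul x (gmul y z) = gmul (gmul x y) z;
  gmul1 : forall x, gmul gone x = x;
  gmulV : forall x, gmul (ginv x) x = gone
}.
Arguments gmul {g}. Arguments gone {g}. Arguments ginv {g}.

Definition is_automorphism (G : Group) (alpha beta : G -> G) : Prop :=
  (forall x y, alpha (gmul x y) = gmul (alpha x) (alpha y)) /\
  (forall x, beta (alpha x) = x) /\ (forall x, alpha (beta x) = x).

Definition apow (G : Group) (alpha beta : G -> G) (n : Z) : G -> G :=
  match n with
  | Z0 => fun g => g
  | Zpos p => Nat.iter (Pos.to_nat p) alpha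
  | Zneg p => Nat.iter (Pos.to_nat p) beta
  end.

Definition ad_comp (G : Group) (k : G) (alpha : G -> G) : G -> G :=
  fun g => gmul (gmul k (alpha g)) (ginv k).
Definition ad_comp_inv (G : Group) (k : G) (beta : G -> G) : G -> G :=
  fun g => beta (gmul (gmul (ginv k) g) k).

Definition Cantor := nat -> bool.
Definition word := list bool.

Definition pre (m : word) (x : Cantor) : Cantor :=
  fun n => if Nat.ltb n (length m) then nth n m false else x (n - length m).

Definition inC (m : word) (x : Cantor) : Prop := exists y, x = pre m y.

Definition cantor_partition (ms : list word) : Prop :=
  forall x, exists! k, k < length ms /\ inC (nth k ms []) x.

Definition V_data (v : Cantor -> Cantor) (ps : list (word * word)) : Prop :=
  cantor_partition (map fst ps) /\ cantor_partition (map snd ps) /\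
  forall k x, k < length ps ->
    v (pre (fst (nth k ps ([], []))) x) = pre (snd (nth k ps ([], []))) x.

Definition bijective {A B} (f : A -> B) : Prop :=
  (forall x y, f x = f y -> x = y) /\ (forall y, exists x, f x = y).

Definition inV (v : Cantor -> Cantor) : Prop :=
  bijective v /\ exists ps, V_data v ps.

(* log_2 v'(x) = |m_k| - |m'_k| on C_{m_k} (well defined for v in V) *)
Definition logslope_rel (v : Cantor -> Cantor) (x : Cantor) (d : Z) : Prop :=
  exists ps k, V_data v ps /\ k < length ps /\ inC (fst (nth k ps ([], []))) x /\
    d = (Z.of_nat (length (fst (nth k ps ([], []))))
         - Z.of_nat (length (snd (nth k ps ([], [])))))%Z.
Definition logslope (v : Cantor -> Cantor) (x : Cantor) : Z :=
  epsilon (inhabits 0%Z) (logslope_rel v x).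

Definition vinv (v : Cantor -> Cantor) (x : Cantor) : Cantor :=
  epsilon (inhabits (fun _ => false)) (fun y => v y = x).

(* Q_2 : eventually zero sequences *)
Definition inQ2 (x : Cantor) : Prop := exists N, forall n, N <= n -> x n = false.

(* finitely supported maps Q_2 -> Gamma (extended by 1 outside Q_2) *)
Definition finsupp (G : Group) (a : Cantor -> G) : Prop :=
  exists s : list Cantor, forall x, a x <> gone -> In x s /\ inQ2 x.

Definition FGel (G : Group) : Type := ((Cantor -> G) * (Cantor -> Cantor))%type.

Definition inFG (G : Group) (p : FGel G) : Prop := finsupp G (fst p) /\ inV (snd p).

Definition Vact (G : Group) (alpha beta : G -> G) (v : Cantor -> Cantor)
  (a : Cantor -> G) : Cantor -> G :=
  fun x => apow G alpha beta (logslope v (vinv v x)) (a (vinv v x)).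

Definition FGmul (G : Group) (alpha beta : G -> G) (p q : FGel G) : FGel G :=
  (fun x => gmul (fst p x) (Vact G alpha beta (snd p) (fst q) x),
   fun x => snd p (snd q x)).

Definition FG_isomorphic (G : Group) (a1 b1 a2 b2 : G -> G) : Prop :=
  exists Phi : FGel G -> FGel G,
    (forall p, inFG G p -> inFG G (Phi p)) /\
    (forall p q, inFG G p -> inFG G q -> Phi p = Phi q -> p = q) /\
    (forall q, inFG G q -> exists p, inFG G p /\ Phi p = q) /\
    (forall p q, inFG G p -> inFG G q ->
       Phi (FGmul G a1 b1 p q) = FGmul G a2 b2 (Phi p) (Phi q)).

(* Main.v *)
Require Import Defs.
From Stdlib Require Import ZArith List ClassicalEpsilon Lia FunctionalExtensionality Classical.
Import ListNotations.

Lemma gmulVr (G : Group) (x : G) : gmul x (ginv x) = gone.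
Proof.
  rewrite <- (gmul1 G (gmul x (ginv x))).
  rewrite <- (gmulV G (ginv x)) at 1.
  rewrite <- gmulA. rewrite (gmulA G (ginv x) x (ginv x)), gmulV, gmul1. apply gmulV.
Qed.

Lemma gmul1r (G : Group) (x : G) : gmul x gone = x.
Proof. rewrite <- (gmulV G x), gmulA, gmulVr, gmul1. reflexivity. Qed.

Lemma gcancel_l (G : Group) (a b c : G) : gmul a b = gmul a c -> b = c.
Proof.
  intro H. rewrite <- (gmul1 G b), <- (gmul1 G c), <- (gmulV G a), <- !gmulA, H. reflexivity.
Qed.

Lemma ginv_unique (G : Group) (a b : G) : gmul a b = gone -> b = ginv a.
Proof. intro H. apply (gcancel_l G a). rewrite H, gmulVr. reflexivity. Qed.

Lemma ginv_mul (G : Group) (a b : G) : ginv (gmul a b) = gmul (ginv b) (ginv a).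
Proof.
  symmetry. apply ginv_unique. rewrite <- gmulA, (gmulA G b), gmulVr, gmul1, gmulVr. reflexivity.
Qed.

Lemma ginv1 (G : Group) : ginv (@gone G) = gone.
Proof. symmetry. apply ginv_unique. apply gmul1. Qed.

Definition invpair {A} (f g : A -> A) := (forall x, f (g x) = x) /\ (forall x, g (f x) = x).

Lemma apow_nonneg (G : Group) f g n : (0 <= n)%Z -> apow G f g n = Nat.iter (Z.to_nat n) f.
Proof. intro H. destruct n; simpl; try reflexivity. lia. Qed.

Lemma apow_nonpos (G : Group) f g n : (n <= 0)%Z -> apow G f g n = Nat.iter (Z.to_nat (- n)) g.
Proof. intro H. destruct n; simpl; try reflexivity. lia. Qed.

Lemma apow_succ (G : Group) f g n x : invpair f g ->
  apow G f g (Z.succ n) x = f (apow G f g n x).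
Proof.
  intros [H1 H2]. destruct (Z_le_gt_dec 0 n).
  - rewrite !apow_nonneg by lia. replace (Z.to_nat (Z.succ n)) with (S (Z.to_nat n)) by lia.
    reflexivity.
  - rewrite !apow_nonpos by lia. replace (Z.to_nat (- n)) with (S (Z.to_nat (- Z.succ n))) by lia.
    simpl. rewrite H1. reflexivity.
Qed.

Lemma apow_pred (G : Group) f g n x : invpair f g ->
  apow G f g (Z.pred n) x = g (apow G f g n x).
Proof.
  intros [H1 H2]. destruct (Z_le_gt_dec n 0).
  - rewrite !apow_nonpos by lia. replace (Z.to_nat (- Z.pred n)) with (S (Z.to_nat (- n))) by lia.
    reflexivity.
  - rewrite !apow_nonneg by lia. replace (Z.to_nat n) with (S (Z.to_nat (Z.pred n))) by lia.
    simpl. rewrite H2. reflexivity.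
Qed.

Lemma apow_add (G : Group) f g n m x : invpair f g ->
  apow G f g (n + m) x = apow G f g n (apow G f g m x).
Proof.
  intro Hp. revert x. induction n using Z.peano_ind; intro x.
  - reflexivity.
  - rewrite Z.add_succ_l, !apow_succ by exact Hp. rewrite IHn. reflexivity.
  - rewrite Z.add_pred_l, !apow_pred by exact Hp. rewrite IHn. reflexivity.
Qed.

Lemma apow_law (G : Group) f1 g1 f2 g2 f3 g3 :
  invpair f1 g1 -> invpair f2 g2 -> invpair f3 g3 ->
  (forall x y, gmul (f1 x) (f2 y) = f3 (gmul x y)) ->
  forall n x y, gmul (apow G f1 g1 n x) (apow G f2 g2 n y) = apow G f3 g3 n (gmul x y).
Proof.
  intros P1 P2 P3 L.
  assert (L' : forall x y, gmul (g1 x) (g2 y) = g3 (gmul x y)).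
  { intros x y. destruct P1 as [A1 B1], P2 as [A2 B2], P3 as [A3 B3].
    rewrite <- (B3 (gmul (g1 x) (g2 y))), <- L, A1, A2. reflexivity. }
  intro n. induction n using Z.peano_ind; intros x y.
  - reflexivity.
  - rewrite !apow_succ by assumption. rewrite L, IHn. reflexivity.
  - rewrite !apow_pred by assumption. rewrite L', IHn. reflexivity.
Qed.

Definition setb (y : Cantor) (n : nat) : Cantor := fun j => if Nat.eqb j n then true else y j.

Lemma pre_setb m u n : length m <= n -> setb (pre m u) n = pre m (setb u (n - length m)).
Proof.
  intro H. apply functional_extensionality. intro j. unfold setb, pre.
  destruct (Nat.eqb_spec j n); destruct (Nat.ltb_spec j (length m));
  destruct (Nat.eqb_spec (j - length m) (n - length m)); try lia; reflexivity.
Qed.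

Lemma inQ2_pre m u : inQ2 (pre m u) <-> inQ2 u.
Proof.
  unfold inQ2, pre. split; intros [N HN].
  - exists N. intros n Hn. specialize (HN (n + length m) ltac:(lia)).
    destruct (Nat.ltb_spec (n + length m) (length m)); try lia.
    now replace (n + length m - length m) with n in HN by lia.
  - exists (N + length m). intros n Hn.
    destruct (Nat.ltb_spec n (length m)); try lia. apply HN. lia.
Qed.

Lemma piece v ps y : V_data v ps -> exists k u, k < length ps /\
   y = pre (fst (nth k ps ([], []))) u /\ v y = pre (snd (nth k ps ([], []))) u.
Proof.
  intros [H1 [H2 H3]]. destruct (H1 y) as [k [[Hk [u Hu]] _]].
  rewrite length_map in Hk.
  change ([] : word) with (fst (([] : word), ([] : word))) in Hu. rewrite map_nth in Hu.
  exists k, u. split; [exact Hk|]. split; [exact Hu|]. rewrite Hu. apply H3. exact Hk.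
Qed.

Lemma V_Q2 v ps y : V_data v ps -> (inQ2 (v y) <-> inQ2 y).
Proof.
  intro HV. destruct (piece v ps y HV) as [k [u [_ [E1 E2]]]].
  rewrite E2, E1, !inQ2_pre. tauto.
Qed.

Definition Shift (v : Cantor -> Cantor) (y : Cantor) (d : Z) : Prop :=
  exists N, forall n, N <= n -> exists j, v (setb y n) = setb (v y) j /\ Z.of_nat j = (Z.of_nat n - d)%Z.

Lemma shift_piece v ps k u : V_data v ps -> k < length ps ->
  Shift v (pre (fst (nth k ps ([], []))) u)
    (Z.of_nat (length (fst (nth k ps ([], [])))) - Z.of_nat (length (snd (nth k ps ([], [])))))%Z.
Proof.
  intros [H1 [H2 H3]] Hk. set (m := fst (nth k ps ([], []))). set (m' := snd (nth k ps ([], []))).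
  exists (length m). intros n Hn. exists (n - length m + length m').
  split; [|lia]. rewrite pre_setb by exact Hn. unfold m, m'. rewrite !H3 by exact Hk.
  rewrite pre_setb by lia. f_equal. f_equal. lia.
Qed.

Lemma shift_unique v y d1 d2 : inQ2 (v y) -> Shift v y d1 -> Shift v y d2 -> d1 = d2.
Proof.
  intros [M HM] [N1 H1] [N2 H2].
  set (n := N1 + N2 + M + Z.abs_nat d1 + Z.abs_nat d2).
  destruct (H1 n ltac:(unfold n; lia)) as [j1 [E1 F1]].
  destruct (H2 n ltac:(unfold n; lia)) as [j2 [E2 F2]].
  rewrite E1 in E2.
  assert (Hj1 : M <= j1). { unfold n in F1. rewrite Nat2Z.inj_add, Zabs2Nat.id_abs in F1. lia. }
  destruct (Nat.eq_dec j1 j2) as [e|ne]. { subst. lia. }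
  exfalso. assert (X := f_equal (fun f => f j1) E2). simpl in X. unfold setb in X.
  rewrite Nat.eqb_refl in X. destruct (Nat.eqb_spec j1 j2); [lia|].
  rewrite HM in X by exact Hj1. discriminate.
Qed.

Lemma shift_comp v w z d e : Shift w z e -> Shift v (w z) d -> Shift (fun x => v (w x)) z (d + e).
Proof.
  intros [Nw Hw] [Nv Hv]. exists (Nw + Nv + Z.abs_nat e). intros n Hn.
  destruct (Hw n ltac:(lia)) as [j [E F]].
  assert (Nv <= j). { rewrite Nat2Z.inj_le in Hn. rewrite !Nat2Z.inj_add, Zabs2Nat.id_abs in Hn. lia. }
  destruct (Hv j H) as [j' [E' F']]. exists j'. split; [|lia]. rewrite E. exact E'.
Qed.

Definition Sl (v : Cantor -> Cantor) (y : Cantor) : Z := epsilon (inhabits 0%Z) (Shift v y).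

Lemma Sl_eq v y d : inQ2 (v y) -> Shift v y d -> Sl v y = d.
Proof.
  intros HQ HS. apply (shift_unique v y); [exact HQ| |exact HS].
  unfold Sl. apply epsilon_spec. exists d. exact HS.
Qed.

Lemma logslope_eq v y : inV v -> inQ2 y -> logslope v y = Sl v y.
Proof.
  intros [_ [ps HV]] HQ. assert (HQ' : inQ2 (v y)) by (apply (V_Q2 v ps y HV); exact HQ).
  symmetry. apply Sl_eq; [exact HQ'|].
  assert (R : logslope_rel v y (logslope v y)).
  { unfold logslope. apply epsilon_spec. destruct (piece v ps y HV) as [k [u [Hk [E1 _]]]].
    eexists. exists ps, k. split; [exact HV|]. split; [exact Hk|]. split; [exists u; exact E1|].
    reflexivity. }
  destruct R as [ps' [k [HV' [Hk [[u Hu] Hd]]]]]. rewrite Hd, Hu.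
  rewrite <- Hu. rewrite Hu at 1. apply shift_piece; assumption.
Qed.

Lemma vinv_r v x : inV v -> v (vinv v x) = x.
Proof.
  intros [[_ Hs] _]. unfold vinv. apply epsilon_spec. apply Hs.
Qed.

Lemma vinv_l v y : inV v -> vinv v (v y) = y.
Proof.
  intros Hv. destruct Hv as [[Hi Hs] X]. apply Hi. apply vinv_r. split; [split|]; assumption.
Qed.

Definition LastOne (x : Cantor) (j : nat) : Prop := x j = true /\ forall i, j < i -> x i = false.
Definition Lz (x : Cantor) : nat := epsilon (inhabits 0) (LastOne x).

Lemma LastOne_unique x j1 j2 : LastOne x j1 -> LastOne x j2 -> j1 = j2.
Proof.
  intros [A1 B1] [A2 B2]. destruct (Nat.lt_total j1 j2) as [h|[h|h]]; auto.
  - rewrite B1 in A2 by exact h. discriminate.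
  - rewrite B2 in A1 by exact h. discriminate.
Qed.

Lemma Lz_eq x j : LastOne x j -> Lz x = j.
Proof. intro H. apply (LastOne_unique x); [|exact H]. unfold Lz. apply epsilon_spec. eauto. Qed.

Lemma LastOne_pre m u j : LastOne u j -> LastOne (pre m u) (length m + j).
Proof.
  intros [A B]. unfold pre. split.
  - destruct (Nat.ltb_spec (length m + j) (length m)); [lia|].
    now replace (length m + j - length m) with j by lia.
  - intros i Hi. destruct (Nat.ltb_spec i (length m)); [lia|]. apply B. lia.
Qed.

Lemma LastOne_ex u : inQ2 u -> (exists i, u i = true) -> exists j, LastOne u j.
Proof.
  intros [N HN]. revert HN. induction N; intros HN [i Hi].
  - rewrite HN in Hi by lia. discriminate.
  - destruct (u N) eqn:E.
    + exists N. split; [exact E|]. intros i' Hi'. apply HN. lia.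
    + apply IHN; [|exists i; exact Hi]. intros n Hn.
      destruct (Nat.eq_dec n N); [subst; exact E|]. apply HN. lia.
Qed.

Definition TT (G : Group) (k : G) (alpha : G -> G) : G -> G := fun g => gmul k (alpha g).
Definition TTi (G : Group) (k : G) (beta : G -> G) : G -> G := fun g => beta (gmul (ginv k) g).
Definition fF (G : Group) (k : G) (alpha beta : G -> G) (x : Cantor) : G :=
  apow G (TT G k alpha) (TTi G k beta) (- Z.of_nat (Lz x)) gone.
Definition EE (G : Group) (k : G) (alpha beta : G -> G) (v : Cantor -> Cantor) (x : Cantor) : G :=
  apow G (TT G k alpha) (TTi G k beta) (Sl v (vinv v x)) (fF G k alpha beta (vinv v x)).
Definition exc (ps : list (word * word)) : list Cantor := map (fun p => pre (snd p) (fun _ => false)) ps.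

Lemma TT_pair (G : Group) k alpha beta : is_automorphism G alpha beta -> invpair (TT G k alpha) (TTi G k beta).
Proof.
  intros [Hm [Hl Hr]]. unfold TT, TTi. split; intro x.
  - rewrite Hr, gmulA, gmulVr, gmul1. reflexivity.
  - rewrite gmulA, gmulV, gmul1, Hl. reflexivity.
Qed.

Lemma key (G : Group) k alpha beta v ps x : is_automorphism G alpha beta ->
  inV v -> V_data v ps -> inQ2 x -> ~ In x (exc ps) -> EE G k alpha beta v x = fF G k alpha beta x.
Proof.
  intros Ha Hv HV HQ Hn. unfold EE.
  set (y := vinv v x). assert (Ey : v y = x) by (apply vinv_r; exact Hv).
  destruct (piece v ps y HV) as [k0 [u [Hk [E1 E2]]]].
  rewrite Ey in E2.
  assert (Hu : inQ2 u). { apply (inQ2_pre (snd (nth k0 ps ([], [])))). rewrite <- E2. exact HQ. }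
  destruct (classic (exists i, u i = true)) as [Hi|Hi].
  - destruct (LastOne_ex u Hu Hi) as [j Hj].
    assert (Lx : Lz x = length (snd (nth k0 ps ([], []))) + j) by (apply Lz_eq; rewrite E2; apply LastOne_pre; exact Hj).
    assert (Ly : Lz y = length (fst (nth k0 ps ([], []))) + j) by (apply Lz_eq; rewrite E1; apply LastOne_pre; exact Hj).
    assert (Sy : Sl v y = (Z.of_nat (length (fst (nth k0 ps ([], [])))) - Z.of_nat (length (snd (nth k0 ps ([], [])))))%Z).
    { apply Sl_eq. rewrite Ey; exact HQ. rewrite E1. apply shift_piece; assumption. }
    unfold fF. rewrite <- apow_add by (apply TT_pair; exact Ha). rewrite Sy, Lx, Ly. f_equal. lia.
  - exfalso. apply Hn. assert (u = fun _ => false).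
    { apply functional_extensionality. intro i. destruct (u i) eqn:E; auto. exfalso; apply Hi; eauto. }
    subst u. rewrite E2. unfold exc.
    change (pre (snd (nth k0 ps ([], []))) (fun _ => false)) with
      ((fun p : word * word => pre (snd p) (fun _ => false)) (nth k0 ps ([], []))).
    apply in_map. apply nth_In. exact Hk.
Qed.

Definition Phi (G : Group) (k : G) (alpha beta : G -> G) (p : FGel G) : FGel G :=
  (fun x => if excluded_middle_informative (inQ2 x)
            then gmul (gmul (fF G k alpha beta x) (fst p x)) (ginv (EE G k alpha beta (snd p) x))
            else fst p x, snd p).

Lemma Sl_spec v y : inV v -> Shift v y (Sl v y).
Proof.
  intros [_ [ps HV]]. unfold Sl. apply epsilon_spec.
  destruct (piece v ps y HV) as [k [u [Hk [E1 _]]]]. rewrite E1. eexists. apply shift_piece; eauto.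
Qed.

Lemma Sl_comp v w z : inV v -> inV w -> inQ2 z ->
  Sl (fun x => v (w x)) z = (Sl v (w z) + Sl w z)%Z.
Proof.
  intros Hv Hw Hz. apply Sl_eq.
  - destruct Hv as [_ [ps HV]]. destruct Hw as [_ [qs HW]].
    apply (V_Q2 v ps _ HV). apply (V_Q2 w qs _ HW). exact Hz.
  - apply shift_comp; apply Sl_spec; assumption.
Qed.

Lemma gmulKV (G : Group) (X Y : G) : gmul (gmul X (ginv Y)) Y = X.
Proof. rewrite <- gmulA, gmulV, gmul1r. reflexivity. Qed.

Lemma apow_one (G : Group) f g : invpair f g -> (forall x y, gmul (f x) (f y) = f (gmul x y)) ->
  forall n, apow G f g n gone = gone.
Proof.
  intros P L n. apply (gcancel_l G (apow G f g n gone)).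
  rewrite (apow_law G f g f g f g P P P L), !gmul1r. reflexivity.
Qed.

Lemma apow_inv (G : Group) f g : invpair f g -> (forall x y, gmul (f x) (f y) = f (gmul x y)) ->
  forall n x, apow G f g n (ginv x) = ginv (apow G f g n x).
Proof.
  intros P L n x. apply ginv_unique. rewrite (apow_law G f g f g f g P P P L), gmulVr.
  apply apow_one; assumption.
Qed.

Lemma ad_pair (G : Group) k alpha beta : is_automorphism G alpha beta ->
  invpair (ad_comp G k alpha) (ad_comp_inv G k beta).
Proof.
  intros [Hm [Hl Hr]]. unfold ad_comp, ad_comp_inv. split; intro x.
  - rewrite Hr, !gmulA, gmulVr, gmul1, <- gmulA, gmulVr, gmul1r. reflexivity.
  - rewrite !gmulA, gmulV, gmul1, <- gmulA, gmulV, gmul1r, Hl. reflexivity.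
Qed.

Lemma hom (G : Group) k alpha beta p q : is_automorphism G alpha beta ->
  inFG G p -> inFG G q ->
  Phi G k alpha beta (FGmul G alpha beta p q) =
  FGmul G (ad_comp G k alpha) (ad_comp_inv G k beta) (Phi G k alpha beta p) (Phi G k alpha beta q).
Proof.
  intros Ha [Hsa Hv] [Hsb Hw]. destruct p as [a v], q as [b w]. simpl in *.
  assert (Pa : invpair alpha beta) by (destruct Ha as [_ [Hl Hr]]; split; assumption).
  assert (La : forall x y, gmul (alpha x) (alpha y) = alpha (gmul x y)) by (intros; destruct Ha as [Hm _]; rewrite Hm; reflexivity).
  assert (PT := TT_pair G k alpha beta Ha).
  assert (Pd := ad_pair G k alpha beta Ha).
  assert (Z2 := apow_law G _ _ _ _ _ _ PT Pa PT
     ltac:(intros x y; unfold TT; rewrite <- gmulA, La; reflexivity)).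
  assert (Z3 := apow_law G _ _ _ _ _ _ Pd PT PT
     ltac:(intros x y; unfold TT, ad_comp; rewrite <- !gmulA, (gmulA G (ginv k)), gmulV, gmul1, La; reflexivity)).
  unfold Phi, FGmul. simpl. f_equal. apply functional_extensionality. intro x.
  unfold Vact.
  set (y := vinv v x).
  assert (Hvy : v y = x) by (apply vinv_r; exact Hv).
  destruct Hv as [Hbv [ps HV]]. assert (Hv : inV v) by (split; [exact Hbv| exists ps; exact HV]).
  destruct (excluded_middle_informative (inQ2 x)) as [Qx|Qx].
  - assert (Qy : inQ2 y) by (apply (V_Q2 v ps y HV); rewrite Hvy; exact Qx).
    destruct (excluded_middle_informative (inQ2 y)) as [_|Qy']; [|contradiction].
    set (z := vinv w y).
    assert (Hwz : w z = y) by (apply vinv_r; exact Hw).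
    assert (Qz : inQ2 z) by (destruct Hw as [_ [qs HW]]; apply (V_Q2 w qs z HW); rewrite Hwz; exact Qy).
    assert (Ez : vinv (fun x0 => v (w x0)) x = z).
    { destruct Hw as [[Hwi _] _]. destruct Hbv as [Hvi _]. apply Hwi, Hvi.
      unfold vinv at 1. rewrite (epsilon_spec (inhabits (fun _ => false)) (fun y0 => v (w y0) = x)).
      - rewrite Hwz, Hvy. reflexivity.
      - exists z. rewrite Hwz, Hvy. reflexivity. }
    unfold EE. fold y. rewrite Ez. fold z.
    rewrite (Sl_comp v w z Hv Hw Qz), Hwz, (apow_add G _ _ _ _ _ PT).
    rewrite (logslope_eq v y Hv Qy).
    set (d := Sl v y). set (Q := apow G (TT G k alpha) (TTi G k beta) (Sl w z) (fF G k alpha beta z)).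
    assert (AtE : forall g, apow G (ad_comp G k alpha) (ad_comp_inv G k beta) d g =
       gmul (apow G (TT G k alpha) (TTi G k beta) d g) (ginv (apow G (TT G k alpha) (TTi G k beta) d gone))).
    { intro g. rewrite <- (gmul1r G g) at 2. rewrite <- (Z3 d g gone), <- gmulA, gmulVr, gmul1r. reflexivity. }
    rewrite AtE, <- !Z2, (apow_inv G alpha beta Pa La).
    rewrite <- (gmul1 G Q) at 1. rewrite <- Z2, !ginv_mul, !gmulA, gmulKV. reflexivity.
  - assert (Qy : ~ inQ2 y) by (intro Q; apply Qx; rewrite <- Hvy; apply (V_Q2 v ps y HV); exact Q).
    destruct (excluded_middle_informative (inQ2 y)) as [Q|_]; [contradiction|].
    assert (By : b y = gone).
    { destruct Hsb as [s Hs]. destruct (classic (b y = gone)) as [e|ne]; [exact e|].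
      exfalso. apply Qy. apply (Hs y ne). }
    rewrite By, (apow_one G alpha beta Pa La), (apow_one G _ _ Pd). reflexivity.
    intros x1 x2. unfold ad_comp. rewrite <- !gmulA. f_equal. rewrite !gmulA. f_equal. rewrite gmulKV, La. reflexivity.
Qed.

Lemma phi_inFG (G : Group) k alpha beta p : is_automorphism G alpha beta ->
  inFG G p -> inFG G (Phi G k alpha beta p).
Proof.
  intros Ha [[s Hs] Hv]. destruct p as [a v]. simpl in *. split; [|exact Hv]. simpl.
  destruct Hv as [Hb [ps HV]]. assert (Hv : inV v) by (split; [exact Hb|exists ps; exact HV]).
  exists (s ++ exc ps). intros x Hx.
  destruct (excluded_middle_informative (inQ2 x)) as [Q|Q].
  - split; [|exact Q]. apply in_or_app.
    destruct (classic (a x = gone)) as [e|ne]; [|left; apply (Hs x ne)].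
    destruct (classic (In x (exc ps))) as [i|ni]; [right; exact i|].
    exfalso. apply Hx. rewrite e, gmul1r, (key G k alpha beta v ps x Ha Hv HV Q ni). apply gmulVr.
  - destruct (Hs x Hx) as [i q]. split; [apply in_or_app; left; exact i|exact q].
Qed.

Lemma phi_surj (G : Group) k alpha beta q : is_automorphism G alpha beta ->
  inFG G q -> exists p, inFG G p /\ Phi G k alpha beta p = q.
Proof.
  intros Ha [[s Hs] Hv]. destruct q as [b v]. simpl in *.
  destruct Hv as [Hb [ps HV]]. assert (Hv : inV v) by (split; [exact Hb|exists ps; exact HV]).
  exists (fun x => if excluded_middle_informative (inQ2 x)
            then gmul (gmul (ginv (fF G k alpha beta x)) (b x)) (EE G k alpha beta v x)
            else b x, v).
  split.
  - split; [|exact Hv]. simpl. exists (s ++ exc ps). intros x Hx.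
    destruct (excluded_middle_informative (inQ2 x)) as [Q|Q].
    + split; [|exact Q]. apply in_or_app.
      destruct (classic (b x = gone)) as [e|ne]; [|left; apply (Hs x ne)].
      destruct (classic (In x (exc ps))) as [i|ni]; [right; exact i|].
      exfalso. apply Hx. rewrite e, gmul1r, (key G k alpha beta v ps x Ha Hv HV Q ni). apply gmulV.
    + destruct (Hs x Hx) as [i q]. split; [apply in_or_app; left; exact i|exact q].
  - unfold Phi. simpl. f_equal. apply functional_extensionality. intro x.
    destruct (excluded_middle_informative (inQ2 x)) as [Q|Q]; [|reflexivity].
    rewrite !gmulA, gmulVr, gmul1, <- gmulA, gmulVr, gmul1r. reflexivity.
Qed.

Lemma phi_inj (G : Group) k alpha beta p q :
  Phi G k alpha beta p = Phi G k alpha beta q -> p = q.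
Proof.
  destruct p as [a v], q as [b w]. unfold Phi. simpl. intro E. injection E as E1 E2. subst w.
  f_equal. apply functional_extensionality. intro x.
  assert (X := f_equal (fun f => f x) E1). simpl in X.
  destruct (excluded_middle_informative (inQ2 x)); [|exact X].
  apply (f_equal (fun t => gmul t (EE G k alpha beta v x))) in X. rewrite !gmulKV in X.
  apply gcancel_l in X. exact X.
Qed.

Theorem mainTheorem9 (G : Group) (alpha alphainv : G -> G) (k : G) :
  is_automorphism G alpha alphainv ->
  FG_isomorphic G alpha alphainv
    (ad_comp G k alpha) (ad_comp_inv G k alphainv).
Proof.
  intro Ha. exists (Phi G k alpha alphainv). split; [|split; [|split]].
  - intros p Hp. apply phi_inFG; assumption.
  - intros p q _ _. apply phi_inj.
  - intros q Hq. apply phi_surj; assumption.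
  - intros p q Hp Hq. apply hom; assumption.
Qed.
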